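(* Let $p\ge 7$ be a prime. Then $$\sum_{k=1}^{p-1}\frac{H_k H_{k,2}}{k}\equiv -\frac{3}{2}\sum_{k=1}^{p-1}\frac{H_k^2}{k^2}\pmod{p}.$$
   Context: For positive integers $n,m$, $H_{n,m}=\sum_{k=1}^n 1/k^m$ and $H_n=H_{n,1}$. Congruences modulo $p$ are taken in the ring of rationals with denominators not divisible by $p$. *)

(* Defs.v *)
From HB Require Import structures.
From mathcomp Require Import all_boot all_order all_algebra.
Set Implicit Arguments. Unset Strict Implicit. Unset Printing Implicit Defensive.
Import Order.TTheory GRing.Theory Num.Theory.
Local Open Scope ring_scope.

Definition Hm (n m : nat) : rat := \sum_(1 <= k < n.+1) ((k%:R : rat) ^+ m)^-1.
Definition H (n : nat) : rat := Hm n 1.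

(* Congruence modulo p in the ring of rationals with denominator prime to p:
   x - y = p * (a/b) with b not divisible by p; for the reduced fraction x - y
   this means p divides the numerator and not the denominator. *)
Definition rat_congr (p : nat) (x y : rat) : Prop :=
  (p %| `|numq (x - y)|)%N /\ ~~ (p %| `|denq (x - y)|)%N.

(* Main.v *)
Require Import Defs.
From HB Require Import structures.
From mathcomp Require Import all_boot all_order all_algebra.
From mathcomp Require Import ring zify.
Import Order.TTheory GRing.Theory Num.Theory.
Local Open Scope ring_scope.

Definition xi (F : fieldType) (k : nat) : F := (k%:R)^-1.
Definition Tb (F : fieldType) (n : nat) (a : nat -> F) : F :=
  \sum_(k < n) (-1)^+k * 'C(n, k.+1)%:R * a k.+1.
Arguments Tb {F} n a.
Definition inv_ok (F : fieldType) (n : nat) :=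
  forall k, (0 < k <= n)%N -> (k%:R : F) != 0.

Lemma Tb_ext (F : fieldType) n (a b : nat -> F) : (forall k, a k = b k) -> Tb n a = Tb n b.
Proof. by move=> h; apply: eq_bigr => k _; rewrite h. Qed.

Lemma Tb1 (F : fieldType) n : (0 < n)%N -> Tb n (fun _ => 1 : F) = 1.
Proof.
move=> n0; have := exprDn (1 : F) (-1) n; rewrite subrr expr0n eqn0Ngt n0 /=.
rewrite big_ord_recl /= expr0 mulr1 bin0 expr1n => /eqP; rewrite eq_sym addrC.
rewrite addr_eq0 => /eqP e.
rewrite -[1 in RHS]opprK -e -sumrN; apply: eq_bigr => i _.
by rewrite expr1n mul1r mulr1 /bump /= add1n exprS -mulr_natr; ring.
Qed.

Lemma cross (F : fieldType) (a b u v : F) : u != 0 -> v != 0 ->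
  a * v = b * u -> a / u = b / v.
Proof.
move=> hu hv e; apply: (mulIf hu); apply: (mulIf hv).
by rewrite divfK // -mulrA (mulrC u) mulrA divfK.
Qed.

Lemma binx (F : fieldType) n k : inv_ok F n.+1 -> (k < n.+1)%N ->
  'C(n, k)%:R * xi F k.+1 = 'C(n.+1, k.+1)%:R * xi F n.+1.
Proof.
move=> ok hk; apply: cross; try apply: ok; rewrite ?ltn0Sn //=.
rewrite -!natrM; congr (_%:R).
by rewrite mulnC (mul_bin_diag n.+1 k) mulnC.
Qed.

Lemma T_L1 (F : fieldType) n (a : nat -> F) : inv_ok F n ->
  \sum_(m < n) Tb m.+1 a * xi F m.+1 = Tb n (fun k => a k * xi F k).
Proof.
elim: n => [|n IH] ok; first by rewrite big_ord0 /Tb big_ord0.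
rewrite big_ord_recr /= IH; last by move=> k /andP [k0 kn]; apply: ok; rewrite k0 ltnW.
rewrite /Tb.
have -> : \sum_(k < n.+1) (-1) ^+ k * ('C(n.+1, k.+1))%:R * (a k.+1 * xi F k.+1) =
   \sum_(k < n.+1) (-1) ^+ k * ('C(n, k.+1))%:R * (a k.+1 * xi F k.+1) +
   \sum_(k < n.+1) (-1) ^+ k * ('C(n, k))%:R * (a k.+1 * xi F k.+1).
  by rewrite -big_split /=; apply: eq_bigr => k _; rewrite binS natrD; ring.
congr (_ + _).
  by rewrite big_ord_recr /= bin_small // mulr0 mul0r addr0.
rewrite mulr_suml; apply: eq_bigr => k _.
have e := @binx F n k ok (ltn_ord k).
rewrite [RHS](_ : _ = (-1)^+k * a k.+1 * ('C(n,k)%:R * xi F k.+1)); last by ring.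
rewrite e; ring.
Qed.

Lemma swap_sum (F : fieldType) (c b : nat -> F) n :
  \sum_(k < n) c k * \sum_(j < k.+1) b j = \sum_(j < n) b j * \sum_(j <= k < n) c k.
Proof.
elim: n => [|n IH]; first by rewrite !big_ord0.
rewrite big_ord_recr /= IH.
have -> : \sum_(j < n.+1) b j * \sum_(j <= k < n.+1) c k =
  \sum_(j < n.+1) b j * \sum_(j <= k < n) c k + \sum_(j < n.+1) b j * c n.
  rewrite -big_split /=; apply: eq_bigr => j _; rewrite big_nat_recr //=; last by rewrite -ltnS.
  by rewrite mulrDr.
rewrite [in RHS]big_ord_recr /= big_geq // mulr0 addr0 -mulr_suml; ring.
Qed.

Lemma alt_tail (F : fieldType) n j : (j < n.+1)%N ->
  \sum_(j <= k < n.+1) (-1)^+k * ('C(n.+1, k.+1)%:R : F) = (-1)^+j * 'C(n, j)%:R.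
Proof.
move=> hj.
pose f := fun k => (-1)^+k * ('C(n, k)%:R : F).
have -> : \sum_(j <= k < n.+1) (-1)^+k * ('C(n.+1, k.+1)%:R : F) =
    - \sum_(j <= k < n.+1) (f k.+1 - f k).
  rewrite -sumrN; apply: eq_bigr => k _; rewrite /f binS natrD exprS; ring.
by rewrite telescope_sumr 1?ltnW // /f bin_small // mulr0 sub0r opprK.
Qed.

Lemma T_L2 (F : fieldType) n (a : nat -> F) : inv_ok F n ->
  Tb n (fun k => \sum_(j < k) a j.+1 * xi F j.+1) = Tb n a * xi F n.
Proof.
case: n => [|n] ok; first by rewrite /Tb !big_ord0 mul0r.
rewrite /Tb.
transitivity (\sum_(k < n.+1) ((-1) ^+ k * ('C(n.+1, k.+1))%:R) *
      \sum_(j < k.+1) a j.+1 * xi F j.+1).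
  by apply: eq_bigr.
rewrite (@swap_sum F (fun k => (-1) ^+ k * ('C(n.+1, k.+1))%:R) (fun j => a j.+1 * xi F j.+1)).
rewrite mulr_suml; apply: eq_bigr => j _.
rewrite alt_tail //.
have e := @binx F n j ok (ltn_ord j).
rewrite [LHS](_ : _ = (-1)^+j * a j.+1 * ('C(n,j)%:R * xi F j.+1)); last by ring.
rewrite e; ring.
Qed.

Lemma inv_okp p (hp : prime p) n : (n < p)%N -> inv_ok 'F_p n.
Proof.
move=> np k /andP [k0 kn]; rewrite -(dvdn_pcharf (pchar_Fp hp)).
apply/negP => /(dvdn_leq k0) pk.
by have := leq_ltn_trans pk (leq_ltn_trans kn np); rewrite ltnn.
Qed.

Lemma Cp p (hp : prime p) k : (k < p)%N -> ('C(p.-1, k)%:R : 'F_p) = (-1)^+k.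
Proof.
elim: k => [|k IH] hk; first by rewrite bin0 expr0.
have p0 : (0 < p)%N := prime_gt0 hp.
have e : 'C(p, k.+1) = ('C(p.-1, k.+1) + 'C(p.-1, k))%N by rewrite -binS prednK.
have : ('C(p, k.+1)%:R : 'F_p) = 0.
  by apply/eqP; rewrite -(dvdn_pcharf (pchar_Fp hp)) prime_dvd_bin // hk.
rewrite e natrD IH ?(ltnW hk) // => /eqP; rewrite addr_eq0 => /eqP ->.
by rewrite exprS mulN1r.
Qed.

Lemma Tp p (hp : prime p) (a : nat -> 'F_p) : Tb p.-1 a = - \sum_(k < p.-1) a k.+1.
Proof.
rewrite /Tb -sumrN; apply: eq_bigr => k _.
have hk : (k.+1 < p)%N by have := ltn_ord k; have := prime_gt0 hp; lia.
by rewrite Cp // exprS mulrCA -expr2 sqrr_sign mulr1 mulN1r.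
Qed.

Lemma sum_Fp p (hp : prime p) (f : 'F_p -> 'F_p) :
  \sum_(a : 'F_p) f a = \sum_(k < p) f k%:R.
Proof.
rewrite -(big_mkord xpredT (fun k => f k%:R)).
transitivity (\sum_(0 <= k < (Zp_trunc (pdiv p)).+2) f k%:R).
  by rewrite big_mkord; apply: eq_bigr => i _; rewrite natr_Zp.
by apply: congr_big => //; rewrite Fp_cast.
Qed.

Lemma psum p (hp : prime p) m : (0 < m)%N -> (2%:R : 'F_p) != 0 ->
  ((2 ^ m - 1)%N%:R : 'F_p) != 0 ->
  \sum_(k < p.-1) (xi 'F_p k.+1)^+m = 0.
Proof.
move=> m0 two nz.
have S0 : \sum_(a : 'F_p) a^+m = 0.
  set S := \sum_(a : 'F_p) a ^+ m.
  have e : S = 2%:R^+m * S.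
    rewrite {1}/S (reindex_inj (mulfI two)) /=.
    by under eq_bigr do rewrite exprMn; rewrite -mulr_sumr.
  have : ((2 ^ m - 1)%N%:R : 'F_p) * S = 0.
    rewrite natrB ?expn_gt0 // natrX mulrBl mul1r -e; exact: subrr.
  by move/eqP; rewrite mulf_eq0 (negbTE nz) /= => /eqP.
rewrite -[RHS]S0 [RHS](reindex_inj invr_inj) [RHS]sum_Fp //.
have p0 : (0 < p)%N := prime_gt0 hp.
rewrite -(big_mkord xpredT (fun k => ((k%:R : 'F_p)^-1)^+m)) (big_ltn p0) big_add1.
rewrite big_mkord /= invr0 expr0n.
rewrite eqn0Ngt m0 /= add0r.
by apply: eq_bigr => i _.
Qed.

Lemma tele (F : fieldType) (u : nat -> F) n :
  \sum_(k < n) (u k.+1 - u k) = u n - u 0%N.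
Proof. by rewrite -(big_mkord xpredT (fun k => u k.+1 - u k)) telescope_sumr. Qed.

Lemma xrev p (hp : prime p) k : (k <= p)%N -> xi 'F_p (p - k) = - xi 'F_p k.
Proof. by move=> hk; rewrite /xi natrB // pchar_Fp_0 // sub0r invrN. Qed.

Definition hh p n : 'F_p := \sum_(j < n) xi 'F_p j.+1.
Definition gg p n : 'F_p := \sum_(j < n) xi 'F_p j.+1 ^+ 2.
Definition tt p n : 'F_p := \sum_(j < n) xi 'F_p j.+1 ^+ 3.
Definition vv p n : 'F_p := \sum_(j < n) hh p j.+1 * xi 'F_p j.+1.

Lemma hhS p n : hh p n.+1 = hh p n + xi 'F_p n.+1.
Proof. by rewrite /hh big_ord_recr. Qed.
Lemma ggS p n : gg p n.+1 = gg p n + xi 'F_p n.+1 ^+ 2.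
Proof. by rewrite /gg big_ord_recr. Qed.
Lemma ttS p n : tt p n.+1 = tt p n + xi 'F_p n.+1 ^+ 3.
Proof. by rewrite /tt big_ord_recr. Qed.
Lemma vvS p n : vv p n.+1 = vv p n + hh p n.+1 * xi 'F_p n.+1.
Proof. by rewrite /vv big_ord_recr. Qed.

Lemma hrev p (hp : prime p) (h0 : hh p p.-1 = 0) k : (k <= p.-1)%N ->
  hh p (p.-1 - k) = hh p k.
Proof.
elim: k => [|k IH] hk; first by rewrite subn0 h0 /hh big_ord0.
have e : (p.-1 - k = (p.-1 - k.+1).+1)%N by lia.
have e' : ((p.-1 - k.+1).+1 = p - k.+1)%N by have := prime_gt0 hp; lia.
have := IH (ltnW hk); rewrite e hhS e' xrev; last by have := prime_gt0 hp; lia.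
  by rewrite [hh p k.+1]hhS => <-; rewrite subrK.
exact: hp.
Qed.

Lemma wrel p n : hh p n ^+ 2 = 2%:R * vv p n - gg p n.
Proof.
elim: n => [|n IH]; first by rewrite /hh /vv /gg !big_ord0 expr0n /= mulr0 subr0.
have : hh p n.+1 ^+ 2 = hh p n ^+2 + 2%:R * hh p n.+1 * xi 'F_p n.+1 - xi 'F_p n.+1 ^+ 2.
  rewrite !hhS; ring.
by move=> ->; rewrite IH vvS ggS; ring.
Qed.

Lemma ndivF p (hp : prime p) (h7 : (7 <= p)%N) k : (0 < k < 7)%N -> (k%:R : 'F_p) != 0.
Proof.
move=> /andP [k0 k7]; rewrite -(dvdn_pcharf (pchar_Fp hp)).
apply/negP => /(dvdn_leq k0) pk; have := leq_trans h7 pk; rewrite leqNgt k7. done.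
Qed.

Lemma core_main p (hp : prime p) (h7 : (7 <= p)%N) :
  \sum_(k < p.-1) hh p k.+1 * gg p k.+1 * xi 'F_p k.+1 = 0 /\
  \sum_(k < p.-1) hh p k.+1 ^+ 2 * xi 'F_p k.+1 ^+ 2 = 0.
Proof.
have two : (2%:R : 'F_p) != 0 by apply: ndivF.
have half : forall y : 'F_p, 2%:R * y = 0 -> y = 0.
  by move=> y /eqP; rewrite mulf_eq0 (negbTE two) /= => /eqP.
have h0 : hh p p.-1 = 0.
  rewrite -[RHS](@psum p hp 1) // ?ndivF //.
have g0 : gg p p.-1 = 0.
  by rewrite /gg (@psum p hp 2) //; apply: ndivF.
have p4 : \sum_(k < p.-1) xi 'F_p k.+1 ^+ 4 = 0.
  apply: (@psum p hp 4) => //.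
  have -> : ((2 ^ 4 - 1)%N%:R : 'F_p) = 3%:R * 5%:R by rewrite -natrM.
  by rewrite mulf_neq0 // ndivF.
have hh0 : hh p 0 = 0 by rewrite /hh big_ord0.
have gg0 : gg p 0 = 0 by rewrite /gg big_ord0.
have tt0 : tt p 0 = 0 by rewrite /tt big_ord0.
have G0 : \sum_(k < p.-1) xi 'F_p k.+1 ^+ 2 * gg p k.+1 = 0.
  apply: half.
  have := @tele _ (fun k => gg p k ^+ 2) p.-1; rewrite /= g0 gg0 subrr.
  have -> : \sum_(k < p.-1) (gg p k.+1 ^+ 2 - gg p k ^+ 2) =
     2%:R * \sum_(k < p.-1) xi 'F_p k.+1 ^+ 2 * gg p k.+1 - \sum_(k < p.-1) xi 'F_p k.+1 ^+ 4.
    rewrite mulr_sumr -sumrB; apply: eq_bigr => k _; rewrite ggS; ring.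
  by rewrite p4 subr0.
have p0 : (0 < p)%N := prime_gt0 hp.
have E0 : \sum_(k < p.-1) xi 'F_p k.+1 ^+ 3 * hh p k.+1 = 0.
  have rev : \sum_(k < p.-1) xi 'F_p k.+1 ^+ 2 * hh p k ^+ 2 =
             \sum_(k < p.-1) xi 'F_p k.+1 ^+ 2 * hh p k.+1 ^+ 2.
    rewrite (reindex_inj rev_ord_inj) /=; apply: eq_bigr => k _.
    have hk := ltn_ord k.
    have e' : ((p.-1 - k.+1).+1 = p - k.+1)%N by lia.
    by rewrite e' xrev ?sqrrN ?hrev //; lia.
  apply: half.
  have : \sum_(k < p.-1) (xi 'F_p k.+1 ^+ 2 * hh p k ^+ 2 - xi 'F_p k.+1 ^+ 2 * hh p k.+1 ^+ 2) = 0.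
    by rewrite sumrB rev subrr.
  have -> : \sum_(k < p.-1) (xi 'F_p k.+1 ^+ 2 * hh p k ^+ 2 - xi 'F_p k.+1 ^+ 2 * hh p k.+1 ^+ 2) =
     \sum_(k < p.-1) xi 'F_p k.+1 ^+ 4 - 2%:R * \sum_(k < p.-1) xi 'F_p k.+1 ^+ 3 * hh p k.+1.
    rewrite mulr_sumr -sumrB; apply: eq_bigr => k _; rewrite /= hhS; ring.
  by rewrite p4 sub0r => /eqP; rewrite oppr_eq0 => /eqP.
have S31 : \sum_(k < p.-1) tt p k.+1 * xi 'F_p k.+1 = 0.
  have := @tele _ (fun k => hh p k * tt p k) p.-1; rewrite /= h0 hh0 !mul0r subrr.
  have -> : \sum_(k < p.-1) (hh p k.+1 * tt p k.+1 - hh p k * tt p k) =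
     \sum_(k < p.-1) tt p k.+1 * xi 'F_p k.+1 + \sum_(k < p.-1) xi 'F_p k.+1 ^+ 3 * hh p k.+1
     - \sum_(k < p.-1) xi 'F_p k.+1 ^+ 4.
    rewrite -big_split -sumrB; apply: eq_bigr => k _; rewrite /= hhS ttS; ring.
  by rewrite E0 p4 addr0 subr0.
have BA : \sum_(k < p.-1) hh p k.+1 ^+ 2 * xi 'F_p k.+1 ^+ 2 +
   2%:R * \sum_(k < p.-1) hh p k.+1 * gg p k.+1 * xi 'F_p k.+1 = 0.
  have := @tele _ (fun k => hh p k ^+ 2 * gg p k) p.-1; rewrite /= h0 hh0 expr0n /= !mul0r subrr.
  have -> : \sum_(k < p.-1) (hh p k.+1 ^+ 2 * gg p k.+1 - hh p k ^+ 2 * gg p k) =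
     \sum_(k < p.-1) hh p k.+1 ^+ 2 * xi 'F_p k.+1 ^+ 2 +
     2%:R * \sum_(k < p.-1) hh p k.+1 * gg p k.+1 * xi 'F_p k.+1
     - 2%:R * \sum_(k < p.-1) xi 'F_p k.+1 ^+ 3 * hh p k.+1
     - \sum_(k < p.-1) xi 'F_p k.+1 ^+ 2 * gg p k.+1
     + \sum_(k < p.-1) xi 'F_p k.+1 ^+ 4.
    rewrite !mulr_sumr -!big_split -!sumrB -big_split /=.
    apply: eq_bigr => k _; rewrite /= hhS ggS; ring.
  by rewrite E0 G0 p4 mulr0 !subr0 addr0.
have okp : forall n, (n < p)%N -> inv_ok 'F_p n by move=> n; apply: inv_okp.
have Lh : forall l, (l < p.-1)%N -> Tb l.+1 (hh p) = xi 'F_p l.+1.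
  move=> l hl.
  have -> : Tb l.+1 (hh p) = Tb l.+1 (fun k => \sum_(j < k) (fun _ => 1 : 'F_p) j.+1 * xi 'F_p j.+1).
    by apply: Tb_ext => k; rewrite /hh; apply: eq_bigr => j _; rewrite mul1r.
  by rewrite (@T_L2 _ l.+1 (fun _ => 1)) ?Tb1 ?mul1r //; apply: okp; lia.
have Lv : forall l, (l < p.-1)%N -> Tb l.+1 (vv p) = xi 'F_p l.+1 ^+ 2.
  move=> l hl.
  transitivity (Tb l.+1 (hh p) * xi 'F_p l.+1).
    by apply: (@T_L2 'F_p l.+1 (hh p)); apply: okp; lia.
  by rewrite Lh // expr2.
have LDv : forall m, (m < p.-1)%N -> Tb m.+1 (fun k => vv p k * xi 'F_p k) = tt p m.+1.
  move=> m hm.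
  rewrite -(@T_L1 'F_p m.+1 (vv p)); last by apply: okp; lia.
  rewrite /tt; apply: eq_bigr => l _; rewrite Lv; last by have := ltn_ord l; lia.
  by rewrite exprS mulrC.
have S112 : \sum_(k < p.-1) vv p k.+1 * xi 'F_p k.+1 * xi 'F_p k.+1 = 0.
  apply: oppr_inj; rewrite oppr0 -(@Tp p hp (fun k => vv p k * xi 'F_p k * xi 'F_p k)).
  rewrite -(@T_L1 'F_p p.-1 (fun k => vv p k * xi 'F_p k)); last by apply: okp; lia.
  rewrite -[RHS]S31; apply: eq_bigr => m _; rewrite LDv //.
have B0 : \sum_(k < p.-1) hh p k.+1 ^+ 2 * xi 'F_p k.+1 ^+ 2 = 0.
  have -> : \sum_(k < p.-1) hh p k.+1 ^+ 2 * xi 'F_p k.+1 ^+ 2 =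
     2%:R * \sum_(k < p.-1) vv p k.+1 * xi 'F_p k.+1 * xi 'F_p k.+1 -
     \sum_(k < p.-1) xi 'F_p k.+1 ^+ 2 * gg p k.+1.
    rewrite mulr_sumr -sumrB; apply: eq_bigr => k _; rewrite /= wrel; ring.
  by rewrite S112 G0 mulr0 subr0.
split => //; apply: half; by rewrite -[RHS]BA B0 add0r.
Qed.

Definition ptr (p : nat) (q : rat) (f : 'F_p) : Prop :=
  exists a b : int, q * b%:~R = a%:~R /\ (b%:~R : 'F_p) != 0 /\ f = a%:~R / b%:~R.

Lemma Fp_int0 (p : nat) (hp : prime p) (z : int) :
  ((z%:~R : 'F_p) == 0) = (p %| `|z|)%N.
Proof. by rewrite -(dvdz_pcharf (pchar_Fp hp)). Qed.

Lemma ptr_add p q1 q2 f1 f2 : ptr p q1 f1 -> ptr p q2 f2 -> ptr p (q1 + q2) (f1 + f2).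
Proof.
move=> [a1 [b1 [e1 [n1 ->]]]] [a2 [b2 [e2 [n2 ->]]]].
exists (a1 * b2 + a2 * b1)%R, (b1 * b2)%R; split; last split.
- by rewrite intrD !intrM -e1 -e2; ring.
- by rewrite intrM mulf_neq0.
- by rewrite intrD !intrM addf_div.
Qed.

Lemma ptr_mul p q1 q2 f1 f2 : ptr p q1 f1 -> ptr p q2 f2 -> ptr p (q1 * q2) (f1 * f2).
Proof.
move=> [a1 [b1 [e1 [n1 ->]]]] [a2 [b2 [e2 [n2 ->]]]].
exists (a1 * a2)%R, (b1 * b2)%R; split; last split.
- by rewrite !intrM -e1 -e2; ring.
- by rewrite intrM mulf_neq0.
- by rewrite !intrM mulf_div.
Qed.

Lemma ptr_opp p q f : ptr p q f -> ptr p (- q) (- f).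
Proof.
move=> [a [b [e [n ->]]]]; exists (- a)%R, b; split; last split => //.
- by rewrite intrN mulNr e.
- by rewrite intrN mulNr.
Qed.

Lemma ptr_nat p n : ptr p (n%:R) (n%:R).
Proof.
exists n%:Z, 1%R; split; last split.
- by rewrite mulr1.
- by rewrite oner_eq0.
- by rewrite divr1.
Qed.

Lemma ptr_invnatX p (hp : prime p) k m : (0 < k < p)%N ->
  ptr p ((k%:R ^+ m)^-1) ((k%:R ^+ m)^-1).
Proof.
move=> /andP [k0 kp]; exists 1%R, (k ^ m)%N%:Z; split; last split.
- by rewrite mulrC -!pmulrn natrX mulfV // expf_neq0 // pnatr_eq0 -lt0n.
- rewrite -pmulrn natrX expf_neq0 // -(dvdn_pcharf (pchar_Fp hp)).
  by apply/negP => /dvdn_leq => /(_ k0); rewrite leqNgt kp.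
- by rewrite -!pmulrn natrX div1r.
Qed.

Lemma ptr_exp p q f m : ptr p q f -> ptr p (q ^+ m) (f ^+ m).
Proof.
move=> h; elim: m => [|m IH]; first exact: (ptr_nat p 1).
by rewrite !exprS; apply: ptr_mul.
Qed.

Lemma ptr_sum p m n (F1 : nat -> rat) (F2 : nat -> 'F_p) :
  (forall i, (m <= i < n)%N -> ptr p (F1 i) (F2 i)) ->
  ptr p (\sum_(m <= i < n) F1 i) (\sum_(m <= i < n) F2 i).
Proof.
move=> h; rewrite big_nat_cond [X in ptr _ _ X]big_nat_cond.
apply: (big_ind2 (ptr p)) => //.
- exact: (ptr_nat p 0).
- by move=> ? ? ? ?; apply: ptr_add.
- by move=> i /andP [hi _]; apply: h.
Qed.

Lemma ptr_congr p (hp : prime p) q : ptr p q 0 -> rat_congr p q 0.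
Proof.
move=> [a [b [e [nb e0]]]].
have ha : (p %| `|a|)%N.
  rewrite -Fp_int0 //; move: e0 => /eqP; rewrite eq_sym mulf_eq0 invr_eq0.
  by rewrite (negbTE nb) orbF.
have nb' : ~~ (p %| `|b|)%N by rewrite -Fp_int0.
rewrite /rat_congr subr0.
have eqnd : (numq q * b = a * denq q)%R.
  have hd : ((denq q)%:~R : rat) != 0 by rewrite intr_eq0 denq_neq0.
  apply: (@intr_inj rat); rewrite !intrM -e [RHS]mulrAC.
  by rewrite -[X in _ = X * _ * _](divq_num_den q) divfK.
have eqn : (`|numq q| * `|b| = `|a| * `|denq q|)%N by rewrite -!abszM eqnd.
split.
- have : (p %| `|numq q| * `|b|)%N by rewrite eqn dvdn_mulr.
  by rewrite Euclid_dvdM // (negbTE nb') orbF.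
- apply/negP => hd.
  have : (`|denq q| %| `|numq q| * `|b|)%N by rewrite eqn dvdn_mull.
  rewrite Gauss_dvdr; last by rewrite coprime_sym coprime_num_den.
  by move=> /(dvdn_trans hd); apply/negP.
Qed.

Definition HF (p n m : nat) : 'F_p := \sum_(1 <= k < n.+1) ((k%:R)^+m)^-1.

Lemma shift_sum (F : fieldType) p (f : nat -> F) :
  \sum_(1 <= k < p) f k = \sum_(k < p.-1) f k.+1.
Proof. by rewrite big_add1 big_mkord. Qed.

Lemma HF1 p n : HF p n 1 = hh p n.
Proof. by rewrite /HF shift_sum /=. Qed.

Lemma HF2 p n : HF p n 2 = gg p n.
Proof. by rewrite /HF shift_sum /=; apply: eq_bigr => j _; rewrite exprVn. Qed.

Lemma ptr_H p (hp : prime p) k : (k < p)%N -> ptr p (H k) (HF p k 1).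
Proof.
move=> hk; apply: ptr_sum => j /andP [j1 jk]; apply: ptr_invnatX => //.
by rewrite j1 /=; apply: leq_trans jk hk.
Qed.

Lemma ptr_Hm2 p (hp : prime p) k : (k < p)%N -> ptr p (Hm k 2) (HF p k 2).
Proof.
move=> hk; apply: ptr_sum => j /andP [j1 jk]; apply: ptr_invnatX => //.
by rewrite j1 /=; apply: leq_trans jk hk.
Qed.

Theorem lemma2p6 (p : nat) (hp : prime p) (h7 : (7 <= p)%N) :
  rat_congr p
    (\sum_(1 <= k < p) H k * Hm k 2 / (k%:R : rat))
    (- (3%:R / 2%:R) * \sum_(1 <= k < p) (H k) ^+ 2 / ((k%:R : rat) ^+ 2)).
Proof.
have [cA cB] := @core_main p hp h7.
have hL : ptr p (\sum_(1 <= k < p) H k * Hm k 2 / (k%:R : rat))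
               (\sum_(1 <= k < p) HF p k 1 * HF p k 2 / (k%:R)).
  apply: ptr_sum => k /andP [k1 kp]; apply: ptr_mul; first apply: ptr_mul.
  - exact: (@ptr_H p hp).
  - exact: (@ptr_Hm2 p hp).
  - by apply: (@ptr_invnatX p hp k 1); rewrite k1.
have hR : ptr p (- (3%:R / 2%:R) * \sum_(1 <= k < p) (H k) ^+ 2 / ((k%:R : rat) ^+ 2))
               (- (3%:R / 2%:R) * \sum_(1 <= k < p) (HF p k 1) ^+ 2 / (k%:R ^+ 2)).
  apply: ptr_mul.
    apply: ptr_opp; apply: ptr_mul; first exact: ptr_nat.
    by apply: (@ptr_invnatX p hp 2 1); apply/andP; split => //; apply: leq_trans h7.
  apply: ptr_sum => k /andP [k1 kp]; apply: ptr_mul.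
  - by apply: ptr_exp; apply: (@ptr_H p hp).
  - by apply: (@ptr_invnatX p hp k 2); rewrite k1.
have e1 : (\sum_(1 <= k < p) HF p k 1 * HF p k 2 / (k%:R) : 'F_p) = 0.
  rewrite shift_sum -[RHS]cA; apply: eq_bigr => k _; by rewrite HF1 HF2.
have e2 : (- (3%:R / 2%:R) * \sum_(1 <= k < p) (HF p k 1) ^+ 2 / (k%:R ^+ 2) : 'F_p) = 0.
  rewrite shift_sum (_ : \sum_(k < p.-1) _ = 0) ?mulr0 // -[RHS]cB.
  by apply: eq_bigr => k _; rewrite HF1 exprVn.
have := @ptr_add p _ _ _ _ hL (@ptr_opp p _ _ hR); rewrite e1 e2 oppr0 addr0 => h.
by have := @ptr_congr p hp _ h; rewrite /rat_congr subr0.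
Qed.
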